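(* Let $N\ge3$ and $p>0$. For each $1\le j\le N-1$ let $W^{(j)}$ be the unique solution in $L^2_c$ of $L_-W^{(j)}=U^{(j)}$. Then $$\langle U^{(j)},W^{(k)}\rangle_{L^2(\Gamma)}=0\ \ (j\ne k),\qquad \langle U^{(j)},W^{(j)}\rangle_{L^2(\Gamma)}>0 .$$ Moreover, the vectors $U^{(1)},\dots,U^{(N-1)}$ are pairwise orthogonal in $L^2(\Gamma)$, and so are the vectors $W^{(1)},\dots,W^{(N-1)}$.
   Context: Let $\Gamma$ be the star graph of $N$ half-lines joined at a single vertex, each edge parametrized by $x\in[0,\infty)$ with vertex at $x=0$. Functions are real-valued; $L^2(\Gamma)=\oplus_{j=1}^NL^2(\mathbb{R}^+)$ with $\langle F,G\rangle_{L^2(\Gamma)}=\sum_j\int_0^\infty f_jg_j\,dx$, and $H^2_\Gamma=\{\Psi\in\oplus_jH^2(\mathbb{R}^+):\psi_1(0)=\dots=\psi_N(0),\ \sum_j\psi_j'(0)=0\}$. Let $\phi(x)=\operatorname{sech}^{1/p}(px)$, $\Phi=\phi\,(1,\dots,1)^T$, $L^2_c=\{V\in L^2(\Gamma):\langle V,\Phi\rangle_{L^2(\Gamma)}=0\}$. $L_-=-\Delta+1-(p+1)\Phi^{2p}$ (componentwise) is self-adjoint on $L^2(\Gamma)$ with domain $H^2_\Gamma$, and its kernel is spanned by $\Phi$. For $k=1,\dots,N-1$ let $e_k\in\mathbb{R}^N$ have first $k$ entries $1$, $(k+1)$-th entry $-k$, other entries $0$, and $U^{(k)}=\phi'(x)e_k$;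 note $U^{(k)}\in L^2_c$. *)

(* Defs.v *)
From Stdlib Require Import Reals.
From Coquelicot Require Import Coquelicot.
Open Scope R_scope.

(* A function on the star graph with N edges: component i (0 <= i < N) is
   the function on the i-th half-line; only values at x >= 0 matter. *)
Definition graph_fun := nat -> R -> R.

Fixpoint sum_upto (n : nat) (f : nat -> R) : R :=
  match n with O => 0 | S m => sum_upto m f + f m end.

Definition int0inf (f : R -> R) : R :=
  RInt_gen f (at_point 0) (Rbar_locally p_infty).

Definition sq_int (f : R -> R) : Prop :=
  ex_RInt_gen (fun x => f x * f x) (at_point 0) (Rbar_locally p_infty).

Definition inner (N : nat) (F G : graph_fun) : R :=
  sum_upto N (fun i => int0inf (fun x => F i x * G i x)).

Definition phi (p x : R) : R := Rpower (/ cosh (p * x)) (/ p).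

Definition Phi (p : R) : graph_fun := fun _ x => phi p x.

(* e_k : first k entries 1, (k+1)-th entry -k (0-based index k), others 0 *)
Definition e_vec (k i : nat) : R :=
  if (i <? k)%nat then 1 else if (i =? k)%nat then - INR k else 0.

Definition U (p : R) (k : nat) : graph_fun :=
  fun i x => Derive (phi p) x * e_vec k i.

(* Domain H^2_Gamma: each component twice differentiable (represented as a
   function on R; only the restriction to [0,oo) matters), with the function
   and its first two derivatives square integrable on [0,oo), continuity at
   the vertex and the Kirchhoff condition sum_j psi_j'(0) = 0. *)
Definition in_H2Gamma (N : nat) (F : graph_fun) : Prop :=
  (forall i, (i < N)%nat ->
     (forall x, ex_derive (F i) x) /\
     (forall x, ex_derive (Derive (F i)) x) /\
     sq_int (F i) /\ sq_int (Derive (F i)) /\ sq_int (Derive (Derive (F i)))) /\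
  (forall i, (i < N)%nat -> F i 0 = F 0%nat 0) /\
  sum_upto N (fun i => Derive (F i) 0) = 0.

Definition in_L2c (N : nat) (p : R) (F : graph_fun) : Prop :=
  (forall i, (i < N)%nat -> sq_int (F i)) /\ inner N F (Phi p) = 0.

Definition Lminus (p : R) (F : graph_fun) : graph_fun :=
  fun i x => - Derive (Derive (F i)) x + F i x
             - (p + 1) * Rpower (phi p x) (2 * p) * F i x.

(* Main.v *)
Require Import Defs.
From Stdlib Require Import Reals Lra Psatz FunctionalExtensionality Arith Lia.
From Coquelicot Require Import Coquelicot.
Open Scope R_scope.

Lemma cosh_pos x : 0 < cosh x.
Proof. unfold cosh. pose proof (exp_pos x). pose proof (exp_pos (-x)). lra. Qed.

Lemma cosh_ge1 x : 1 <= cosh x.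
Proof.
  unfold cosh. pose proof (exp_pos x). rewrite exp_Ropp.
  assert (H0: 0 <= (exp x - 1)^2) by apply pow2_ge_0.
  assert (E: (exp x + / exp x) / 2 - 1 = (exp x - 1)^2 / (2 * exp x)) by (field; lra).
  assert (0 <= (exp x - 1)^2 / (2 * exp x)).
  { apply Rdiv_le_0_compat; lra. }
  lra.
Qed.

Lemma cosh2_sinh2 x : cosh x ^ 2 - sinh x ^ 2 = 1.
Proof. unfold cosh, sinh. rewrite exp_Ropp. pose proof (exp_pos x). field. lra. Qed.

Lemma phi_exp p x : phi p x = exp (- (/ p * ln (cosh (p * x)))).
Proof.
  unfold phi, Rpower. rewrite ln_Rinv by apply cosh_pos. f_equal. ring.
Qed.

Lemma is_derive_phi p x : 0 < p -> is_derive (phi p) x (- tanh (p * x) * phi p x).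
Proof.
  intros Hp.
  assert (E: phi p = fun x => exp (- (/ p * ln ((exp (p*x) + exp (- (p*x))) / 2)))).
  { apply functional_extensionality; intro y. rewrite phi_exp. reflexivity. }
  rewrite E. auto_derive.
  - pose proof (exp_pos (p*x)). pose proof (exp_pos (-(p*x))). lra.
  - unfold tanh, sinh, cosh. unfold Rdiv.
    pose proof (exp_pos (p*x)). pose proof (exp_pos (-(p*x))).
    set (e1 := exp (p*x)) in *. set (e2 := exp (-(p*x))) in *.
    set (Z := exp _). field. split; [lra|]. apply Rgt_not_eq. lra.
Qed.

Lemma phi_pos p x : 0 < phi p x.
Proof. rewrite phi_exp. apply exp_pos. Qed.

Lemma phi_le1 p x : 0 < p -> phi p x <= 1.
Proof.
  intros Hp. rewrite phi_exp. rewrite <- exp_0. 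
  destruct (Req_dec (cosh (p*x)) 1) as [E|E].
  - rewrite E, ln_1. right. f_equal. ring.
  - left. apply exp_increasing.
    assert (0 < ln (cosh (p * x))).
    { rewrite <- ln_1. apply ln_increasing; [lra|]. pose proof (cosh_ge1 (p*x)). lra. }
    assert (0 < / p) by (apply Rinv_0_lt_compat; lra).
    nra.
Qed.

Lemma phi0 p : phi p 0 = 1.
Proof. rewrite phi_exp. rewrite Rmult_0_r, cosh_0, ln_1. rewrite Rmult_0_r, Ropp_0. apply exp_0. Qed.

Lemma Dphi p : 0 < p -> Derive (phi p) = fun x => - tanh (p * x) * phi p x.
Proof.
  intros Hp. apply functional_extensionality; intro x.
  apply is_derive_unique. apply is_derive_phi; auto.
Qed.

Lemma tanh_sq x : tanh x ^ 2 = 1 - / cosh x ^ 2.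
Proof.
  unfold tanh. pose proof (cosh2_sinh2 x). pose proof (cosh_pos x).
  replace (sinh x) with (sinh x) by reflexivity.
  assert (E: sinh x ^ 2 = cosh x ^ 2 - 1) by lra.
  unfold Rdiv. rewrite Rpow_mult_distr, E. field. lra.
Qed.

Lemma tanh_sq_le1 x : tanh x ^ 2 <= 1.
Proof.
  rewrite tanh_sq. pose proof (cosh_pos x).
  assert (0 < / cosh x ^ 2) by (apply Rinv_0_lt_compat; nra). lra.
Qed.

Lemma tanh0 : tanh 0 = 0.
Proof. unfold tanh, sinh. rewrite Ropp_0. unfold Rdiv. ring. Qed.

Lemma tanh_pos x : 0 < x -> 0 < tanh x.
Proof.
  intros Hx. unfold tanh, sinh. apply Rdiv_lt_0_compat; [|apply cosh_pos].
  apply Rdiv_lt_0_compat; [|lra]. assert (exp (-x) < exp x) by (apply exp_increasing; lra). lra.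
Qed.

Lemma sech2 p x : 0 < p -> Rpower (phi p x) (2 * p) = 1 - tanh (p * x) ^ 2.
Proof.
  intros Hp. unfold phi. rewrite Rpower_mult.
  replace (/ p * (2 * p)) with (INR 2) by (simpl; field; lra).
  rewrite Rpower_pow. 2: apply Rinv_0_lt_compat, cosh_pos.
  rewrite tanh_sq. pose proof (cosh_pos (p*x)). field. lra.
Qed.

Lemma is_derive_th p x : is_derive (fun y => tanh (p * y)) x (p * (1 - tanh (p * x) ^ 2)).
Proof.
  rewrite tanh_sq. unfold tanh, sinh, cosh. auto_derive.
  - pose proof (exp_pos (p*x)). pose proof (exp_pos (-(p*x))). lra.
  - pose proof (exp_pos (p*x)). pose proof (exp_pos (-(p*x))).
    rewrite exp_Ropp. rewrite exp_Ropp in H0.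
    set (e1 := exp (p*x)) in *. field. split; nra.
Qed.
Notation F0 := (at_point 0).
Notation Finf := (Rbar_locally p_infty).

Lemma ball_R (l y eps : R) : ball l eps y <-> Rabs (y - l) < eps.
Proof. reflexivity. Qed.

Lemma gen_elim (f : R -> R) (l : R) : is_RInt_gen f F0 Finf l ->
  forall eps, 0 < eps -> exists M, forall b, M < b ->
  exists y, is_RInt f 0 b y /\ Rabs (y - l) < eps.
Proof.
  intros H eps He.
  assert (Hb: locally l (fun y => Rabs (y - l) < eps)).
  { exists (mkposreal eps He). intros y Hy. exact Hy. }
  specialize (H _ Hb). unfold filtermapi in H.
  destruct H as [Q R' HQ HR HQR].
  destruct HR as [M HM]. exists M. intros b Hb'.
  apply (HQR 0 b HQ (HM b Hb')).
Qed.

Lemma gen_intro (f : R -> R) (l : R) : (forall b, 0 <= b -> ex_RInt f 0 b) ->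
  (forall eps, 0 < eps -> exists M, forall b, M < b -> Rabs (RInt f 0 b - l) < eps) ->
  is_RInt_gen f F0 Finf l.
Proof.
  intros Hex Hlim P [eps HP].
  destruct (Hlim eps (cond_pos eps)) as [M HM].
  apply Filter_prod with (fun a => a = 0) (fun b => Rmax M 0 < b).
  - reflexivity.
  - exists (Rmax M 0). auto.
  - intros a b -> Hb. simpl. exists (RInt f 0 b). split.
    + apply (RInt_correct (V:=R_CompleteNormedModule)). apply Hex. pose proof (Rmax_r M 0). lra.
    + apply HP. apply HM. pose proof (Rmax_l M 0). lra.
Qed.

Lemma cmp (g h : R -> R) : (forall x, continuous g x) -> (forall x, 0 <= x -> 0 <= g x <= h x) ->
  ex_RInt_gen h F0 Finf -> ex_RInt_gen g F0 Finf.
Proof.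
  intros Hc Hgh [lh Hlh].
  assert (exg: forall a b, ex_RInt g a b).
  { intros a b. apply (ex_RInt_continuous (V:=R_CompleteNormedModule)). intros; apply Hc. }
  assert (mono: forall b b', 0 <= b <= b' -> RInt g 0 b <= RInt g 0 b').
  { intros b b' Hb. rewrite <- (RInt_Chasles g 0 b b') by apply exg.
    change (plus (RInt g 0 b) (RInt g b b')) with (RInt g 0 b + RInt g b b').
    assert (0 <= RInt g b b'). { apply RInt_ge_0; [lra|apply exg|]. intros x Hx. apply Hgh. lra. }
    lra. }
  assert (bnd: forall b, 0 <= b -> RInt g 0 b <= lh).
  { intros b Hb. apply Rnot_lt_le. intro Hlt.
    destruct (gen_elim h lh Hlh (RInt g 0 b - lh)) as [M HM]; [lra|].
    destruct (HM (Rmax b M + 1)) as [y [Hy1 Hy2]]. { pose proof (Rmax_r b M). lra. }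
    assert (RInt g 0 (Rmax b M + 1) <= y).
    { rewrite <- (is_RInt_unique _ _ _ _ Hy1). apply RInt_le.
      - pose proof (Rmax_l b M). lra.
      - apply exg.
      - exists y; auto.
      - intros x Hx. apply Hgh. lra. }
    assert (RInt g 0 b <= RInt g 0 (Rmax b M + 1)).
    { apply mono. pose proof (Rmax_l b M). lra. }
    apply Rabs_def2 in Hy2. lra. }
  set (E := fun z => exists b, 0 <= b /\ z = RInt g 0 b).
  destruct (completeness E) as [S [HS1 HS2]].
  { exists lh. intros z [b [Hb ->]]. apply bnd; auto. }
  { exists (RInt g 0 0). exists 0. split; auto; lra. }
  exists S. apply gen_intro.
  - intros; apply exg.
  - intros eps He.
    assert (exists b0, 0 <= b0 /\ S - eps < RInt g 0 b0) as [b0 [Hb0 Hb0']].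
    { apply Classical_Prop.NNPP. intro Hn.
      assert (S <= S - eps); [|lra].
      apply HS2. intros z [b [Hb ->]]. apply Rnot_lt_le. intro Hlt. apply Hn. exists b. auto. }
    exists b0. intros b Hb.
    assert (RInt g 0 b0 <= RInt g 0 b) by (apply mono; lra).
    assert (RInt g 0 b <= S) by (apply HS1; exists b; split; auto; lra).
    apply Rabs_def1; lra.
Qed.

Lemma exC1 (f : R -> R) a b c : a <= b <= c -> ex_RInt f a c -> ex_RInt f a b.
Proof. apply (ex_RInt_Chasles_1 (V:=R_CompleteNormedModule)). Qed.
Lemma exC2 (f : R -> R) a b c : a <= b <= c -> ex_RInt f a c -> ex_RInt f b c.
Proof. apply (ex_RInt_Chasles_2 (V:=R_CompleteNormedModule)). Qed.
Lemma exCst (c a b : R) : ex_RInt (fun _ => c) a b.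
Proof. apply (ex_RInt_const (V:=R_CompleteNormedModule)). Qed.

Lemma noint (H : R -> R) X eps : ex_RInt_gen H F0 Finf -> 0 <= X -> 0 < eps ->
  (forall x, 0 <= x -> 0 <= H x) -> (forall x, X <= x -> eps <= H x) -> False.
Proof.
  intros [l Hl] HX He Hpos Hbig.
  destruct (gen_elim H l Hl 1) as [M HM]; [lra|].
  set (b := Rmax M X + (Rabs l + 1) / eps + 1).
  assert (Hq: 0 <= (Rabs l + 1) / eps) by (apply Rdiv_le_0_compat; [pose proof (Rabs_pos l)|]; lra).
  destruct (HM b) as [y [Hy1 Hy2]]. { unfold b. pose proof (Rmax_l M X). lra. }
  assert (HbX: X <= b). { unfold b. pose proof (Rmax_r M X). lra. }
  assert (Hex: ex_RInt H 0 b) by (exists y; auto).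
  rewrite <- (is_RInt_unique _ _ _ _ Hy1) in Hy2.
  rewrite <- (RInt_Chasles H 0 X b) in Hy2.
  2: apply exC1 with b; auto; lra.
  2: apply exC2 with 0; auto; lra.
  change (plus (RInt H 0 X) (RInt H X b)) with (RInt H 0 X + RInt H X b) in Hy2.
  assert (0 <= RInt H 0 X).
  { apply RInt_ge_0; auto. apply exC1 with b; auto; lra. intros; apply Hpos; lra. }
  assert (RInt (fun _ => eps) X b <= RInt H X b).
  { apply RInt_le; auto. apply exCst. apply exC2 with 0; auto; lra.
    intros; apply Hbig; lra. }
  rewrite RInt_const in H1. change (scal (b - X) eps) with ((b - X) * eps) in H1.
  assert ((b - X) * eps >= Rabs l + 1).
  { assert (b - X >= (Rabs l + 1)/eps + 1) by (unfold b; pose proof (Rmax_r M X); lra).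
    assert ((b - X) * eps >= ((Rabs l + 1)/eps + 1) * eps) by nra.
    replace (((Rabs l + 1)/eps + 1) * eps) with (Rabs l + 1 + eps) in H3 by (field; lra). lra. }
  pose proof (Rle_abs l). apply Rabs_def2 in Hy2. lra.
Qed.

Lemma cmul (f g : R -> R) x : continuous f x -> continuous g x -> continuous (fun y => f y * g y) x.
Proof. apply (continuous_mult (K:=R_AbsRing)). Qed.
Lemma cplus (f g : R -> R) x : continuous f x -> continuous g x -> continuous (fun y => f y + g y) x.
Proof. apply (continuous_plus (V:=R_NormedModule)). Qed.
Lemma cconst (c : R) x : continuous (fun _ : R => c) x.
Proof. apply (continuous_const (U:=R_UniformSpace) (V:=R_UniformSpace)). Qed.

Lemma ex_lin (f g : R -> R) c1 c2 : ex_RInt_gen f F0 Finf -> ex_RInt_gen g F0 Finf ->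
  ex_RInt_gen (fun x => c1 * f x + c2 * g x) F0 Finf.
Proof.
  intros [lf Hf] [lg Hg].
  exists (plus (scal c1 lf) (scal c2 lg)).
  apply (is_RInt_gen_plus (V:=R_NormedModule) (fun y => scal c1 (f y)) (fun y => scal c2 (g y))).
  - apply (is_RInt_gen_scal (V:=R_NormedModule)); auto.
  - apply (is_RInt_gen_scal (V:=R_NormedModule)); auto.
Qed.

Lemma int_lin (h f g : R -> R) c1 c2 : ex_RInt_gen f F0 Finf -> ex_RInt_gen g F0 Finf ->
  (forall x, 0 <= x -> h x = c1 * f x + c2 * g x) ->
  int0inf h = c1 * int0inf f + c2 * int0inf g.
Proof.
  intros Hf Hg Hh. unfold int0inf.
  pose proof (RInt_gen_correct (V:=R_CompleteNormedModule) _ Hf) as Hf'.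
  pose proof (RInt_gen_correct (V:=R_CompleteNormedModule) _ Hg) as Hg'.
  apply (is_RInt_gen_unique (V:=R_CompleteNormedModule)).
  apply (is_RInt_gen_ext (V:=R_NormedModule) (fun x => c1 * f x + c2 * g x)).
  - apply Filter_prod with (fun a => a = 0) (fun b => 0 < b).
    + reflexivity.
    + exists 0. auto.
    + intros a b -> Hb x Hx. simpl in Hx. rewrite Rmin_left in Hx by lra. symmetry. apply Hh. lra.
  - apply (is_RInt_gen_plus (V:=R_NormedModule) (fun y => scal c1 (f y)) (fun y => scal c2 (g y))).
    + apply (is_RInt_gen_scal (V:=R_NormedModule)); auto.
    + apply (is_RInt_gen_scal (V:=R_NormedModule)); auto.
Qed.

Lemma ex_ext (f g : R -> R) : (forall x, f x = g x) -> ex_RInt_gen f F0 Finf -> ex_RInt_gen g F0 Finf.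
Proof. apply (ex_RInt_gen_ext_eq (V:=R_NormedModule)). Qed.

Lemma prod_ex (f1 f2 : R -> R) : (forall x, continuous f1 x) -> (forall x, continuous f2 x) ->
  ex_RInt_gen (fun x => f1 x * f1 x) F0 Finf -> ex_RInt_gen (fun x => f2 x * f2 x) F0 Finf ->
  ex_RInt_gen (fun x => f1 x * f2 x) F0 Finf.
Proof.
  intros C1 C2 H1 H2.
  assert (Hh: ex_RInt_gen (fun x => 1 * (f1 x * f1 x) + 1 * (f2 x * f2 x)) F0 Finf) by (apply ex_lin; auto).
  assert (Hg: ex_RInt_gen (fun x => f1 x * f2 x + (/2 * (f1 x * f1 x) + /2 * (f2 x * f2 x))) F0 Finf).
  { apply cmp with (3 := Hh).
    - intros x. apply cplus. apply cmul; auto. apply cplus; apply cmul; try apply cconst; apply cmul; auto.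
    - intros x _. cbv beta. pose proof (pow2_ge_0 (f1 x + f2 x)). pose proof (pow2_ge_0 (f1 x - f2 x)).
      split; nra. }
  apply ex_ext with (fun x => 1 * (f1 x * f2 x + (/2 * (f1 x * f1 x) + /2 * (f2 x * f2 x))) + (-/2) * (1 * (f1 x * f1 x) + 1 * (f2 x * f2 x))).
  - intros; field.
  - apply ex_lin; auto.
Qed.

Lemma is_derive_eq (f : R -> R) x d d' : is_derive f x d -> d = d' -> is_derive f x d'.
Proof. intros H <-; exact H. Qed.

Lemma const0 (Rf : R -> R) : (forall x, 0 <= x -> is_derive Rf x 0) -> forall x, 0 <= x -> Rf x = Rf 0.
Proof.
  intros Hd x Hx. destruct (Req_dec x 0) as [->|Hx0]; auto.
  destruct (MVT_gen Rf 0 x (fun _ => 0)) as [c [Hc1 Hc2]].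
  - intros y Hy. apply Hd. rewrite Rmin_left in Hy by lra. lra.
  - intros y Hy. rewrite Rmin_left in Hy by lra. apply continuity_pt_filterlim.
    apply (ex_derive_continuous (K:=R_AbsRing) (V:=R_NormedModule)). exists 0. apply Hd. lra.
  - lra.
Qed.

Lemma Qlemma p (f : R -> R) : 0 < p ->
  (forall x, 0 <= x -> is_derive f x (- tanh (p * x) * f x)) ->
  forall x, 0 <= x -> f x = f 0 * phi p x.
Proof.
  intros Hp Hd.
  set (Rf := fun x => f x * / phi p x).
  assert (HR: forall x, 0 <= x -> is_derive Rf x 0).
  { intros x Hx. unfold Rf.
    pose proof (phi_pos p x) as Hpx.
    eapply is_derive_eq.
    - apply (is_derive_mult f (fun y => / phi p y)). apply Hd; auto.
      apply is_derive_inv. apply is_derive_phi; auto. lra.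
      intros; apply Rmult_comm.
    - unfold plus, mult; simpl. field. lra. }
  intros x Hx. pose proof (const0 Rf HR x Hx) as E. unfold Rf in E.
  rewrite phi0 in E. pose proof (phi_pos p x).
  replace (f x) with (f x * / phi p x * phi p x) by (field; lra). rewrite E. field.
Qed.

Lemma homog p (f H : R -> R) : 0 < p ->
  (forall x, ex_derive f x) -> (forall x, ex_derive (Derive f) x) ->
  (forall x, 0 <= x -> Derive (Derive f) x = (1 - (p + 1) * (1 - tanh (p * x) ^ 2)) * f x) ->
  ex_RInt_gen H F0 Finf ->
  (forall x, 0 <= x -> f x * f x + Derive f x * Derive f x <= H x) ->
  forall x, 0 <= x -> f x = f 0 * phi p x /\ Derive f x = - tanh (p * x) * f x.
Proof.
  intros Hp H1 H2 Heq HH Hdom.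
  set (M := fun x => (Derive f x + tanh (p * x) * f x) * phi p x).
  assert (HM: forall x, 0 <= x -> is_derive M x 0).
  { intros x Hx. unfold M.
    eapply is_derive_eq.
    - apply (is_derive_mult (fun t => Derive f t + tanh (p * t) * f t) (phi p)).
      + apply (is_derive_plus (Derive f) (fun t => tanh (p * t) * f t)).
        * apply Derive_correct, H2.
        * apply (is_derive_mult (fun t => tanh (p * t)) f).
          -- apply is_derive_th.
          -- apply Derive_correct, H1.
          -- intros; apply Rmult_comm.
      + apply is_derive_phi; auto.
      + intros; apply Rmult_comm.
    - unfold plus, mult; simpl. rewrite Heq by auto. ring. }
  assert (HM0: M 0 = Derive f 0).
  { unfold M. rewrite Rmult_0_r, tanh0, phi0. ring. }
  assert (Hc: Derive f 0 = 0).
  { destruct (Req_dec (Derive f 0) 0) as [E|E]; auto. exfalso.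
    set (c := Derive f 0) in *.
    apply (noint H 0 (c * c / 2)); [exact HH | lra | | |].
    - assert (0 < c * c) by (destruct (Rlt_or_le 0 c); nra); nra.
    - intros x Hx. specialize (Hdom x Hx). nra.
    - intros x Hx. specialize (Hdom x Hx).
      pose proof (const0 M HM x Hx) as E1. rewrite HM0 in E1. unfold M in E1.
      pose proof (phi_pos p x). pose proof (phi_le1 p x Hp).
      pose proof (tanh_sq_le1 (p * x)).
      set (A := Derive f x + tanh (p * x) * f x) in *.
      set (t := tanh (p * x)) in *. set (ph := phi p x) in *. set (d := Derive f x) in *.
      assert (HA: A = d + t * f x) by reflexivity.
      clearbody A t ph d c. subst c.
      assert (Hcc: (A * ph) * (A * ph) = A * A * (ph * ph)) by ring.
      assert (A * A * (ph * ph) <= A * A).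
      { assert (0 <= A * A * (1 - ph * ph)).
        { apply Rmult_le_pos. apply Rle_0_sqr. nra. }
        nra. }
      assert (A * A <= 2 * (d * d) + 2 * (t * t * (f x * f x))).
      { rewrite HA. pose proof (pow2_ge_0 (d - t * f x)). nra. }
      assert (t * t * (f x * f x) <= f x * f x).
      { assert (0 <= (1 - t * t) * (f x * f x)).
        { apply Rmult_le_pos. nra. apply Rle_0_sqr. }
        nra. }
      nra. }
  assert (Hz: forall x, 0 <= x -> Derive f x = - tanh (p * x) * f x).
  { intros x Hx. pose proof (const0 M HM x Hx) as E1. rewrite HM0, Hc in E1. unfold M in E1.
    pose proof (phi_pos p x).
    apply Rmult_integral in E1. destruct E1; lra. }
  intros x Hx. split; auto.
  apply (Qlemma p f Hp); auto.
  intros y Hy. rewrite <- Hz by auto. apply Derive_correct, H1.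
Qed.

Lemma cont_ex (f : R -> R) x : ex_derive f x -> continuous f x.
Proof. apply (ex_derive_continuous (K:=R_AbsRing) (V:=R_NormedModule)). Qed.
Lemma cont_th p x : continuous (fun y => tanh (p * y)) x.
Proof. apply cont_ex. eexists. apply is_derive_th. Qed.
Lemma cont_phi p x : 0 < p -> continuous (phi p) x.
Proof. intros Hp. apply cont_ex. eexists. apply is_derive_phi; auto. Qed.
Lemma copp (f : R -> R) x : continuous f x -> continuous (fun y => - f y) x.
Proof. apply (continuous_opp (V:=R_NormedModule)). Qed.

Lemma amgm a d : a * d <= (a * a + d * d) / 2.
Proof. pose proof (Rle_0_sqr (a - d)). unfold Rsqr in *. lra. Qed.

Lemma tanh_le1 x : tanh x <= 1.
Proof. pose proof (tanh_sq_le1 x). destruct (Rle_lt_dec (tanh x) 1); auto. nra. Qed.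

Lemma posit p (u : R -> R) : 0 < p ->
  (forall x, ex_derive u x) -> (forall x, ex_derive (Derive u) x) ->
  (forall x, 0 <= x -> - Derive (Derive u) x + u x - (p + 1) * (1 - tanh (p * x) ^ 2) * u x
                       = - tanh (p * x) * phi p x) ->
  u 0 = 0 ->
  ex_RInt_gen (fun x => u x * u x) F0 Finf ->
  ex_RInt_gen (fun x => Derive u x * Derive u x) F0 Finf ->
  ex_RInt_gen (fun x => (- tanh (p * x) * phi p x) * u x) F0 Finf ->
  0 < int0inf (fun x => (- tanh (p * x) * phi p x) * u x).
Proof.
  intros Hp H1 H2 Heq Hu0 Iu Idu Igu.
  set (g := fun x => (- tanh (p * x) * phi p x) * u x) in *.
  set (Q := fun x => (Derive u x + tanh (p * x) * u x) * (Derive u x + tanh (p * x) * u x)).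
  set (B := fun x => u x * Derive u x + tanh (p * x) * (u x * u x)).
  assert (CQ: forall x, continuous Q x).
  { intros x. unfold Q. apply cmul; apply cplus; try apply cmul;
      try apply cont_th; try (apply cont_ex; auto). }
  assert (Cg: forall x, continuous (fun x => Q x - g x) x).
  { intros x. apply cplus; auto. apply copp. unfold g. apply cmul. apply cmul.
    apply copp, cont_th. apply cont_phi; auto. apply cont_ex; auto. }
  assert (Q0: forall x, 0 <= Q x) by (intros; unfold Q; apply Rle_0_sqr).
  assert (Hx0: exists x0, 0 <= x0 /\ 0 < Q x0).
  { apply Classical_Prop.NNPP. intro Hn.
    assert (Hd: forall x, 0 <= x -> Derive u x = - tanh (p * x) * u x).
    { intros x Hx. assert (Q x <= 0) by (apply Rnot_lt_le; intro; apply Hn; exists x; auto).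
      assert (Q x = 0) by (pose proof (Q0 x); lra). unfold Q in H0.
      apply Rmult_integral in H0. destruct H0; lra. }
    assert (Hz: forall x, 0 <= x -> u x = 0).
    { intros x Hx. rewrite (Qlemma p u Hp) by (auto; intros; rewrite <- Hd by auto; apply Derive_correct, H1).
      rewrite Hu0. ring. }
    assert (Hdz: Derive (Derive u) 1 = 0).
    { rewrite (Derive_ext_loc (Derive u) (fun _ => 0)). apply Derive_const.
      assert (Hh: 0 < / 2) by lra.
      exists (mkposreal _ Hh). intros t Ht. apply ball_R in Ht. simpl in Ht.
      apply Rabs_def2 in Ht. unfold minus, plus, opp in Ht; simpl in Ht. rewrite Hd by lra. rewrite Hz by lra. ring. }
    specialize (Heq 1 ltac:(lra)). rewrite Hdz, Hz in Heq by lra.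
    pose proof (tanh_pos (p * 1) ltac:(nra)). pose proof (phi_pos p 1). nra. }
  destruct Hx0 as [x0 [Hx0 HQx0]].
  assert (Heta: exists eta, 0 < eta /\ forall y, Rabs (y - x0) < eta -> Q x0 / 2 < Q y).
  { assert (Hb: locally (Q x0) (fun z => Rabs (z - Q x0) < Q x0 / 2)).
    { assert (Hh: 0 < Q x0 / 2) by lra. exists (mkposreal _ Hh). intros z Hz. exact Hz. }
    destruct (CQ x0 _ Hb) as [eta Heta]. exists eta. split; [apply cond_pos|].
    intros y Hy. specialize (Heta y Hy). simpl in Heta. apply Rabs_def2 in Heta. lra. }
  destruct Heta as [eta [Heta HetaQ]].
  set (x1 := x0 + eta / 2).
  assert (exQ: forall a b, ex_RInt Q a b).
  { intros a b. apply (ex_RInt_continuous (V:=R_CompleteNormedModule)). intros; apply CQ. }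
  set (delta := RInt Q x0 x1).
  assert (Hdelta: 0 < delta).
  { apply RInt_gt_0. unfold x1; lra.
    - intros x Hx. assert (Q x0 / 2 < Q x) by (apply HetaQ; apply Rabs_def1; unfold x1 in Hx; lra). lra.
    - intros; apply CQ. }
  assert (HQb: forall b, x1 <= b -> delta <= RInt Q 0 b).
  { intros b Hb.
    rewrite <- (RInt_Chasles Q 0 x0 b) by apply exQ.
    rewrite <- (RInt_Chasles Q x0 x1 b) by apply exQ.
    change (plus (RInt Q 0 x0) (plus (RInt Q x0 x1) (RInt Q x1 b))) with
      (RInt Q 0 x0 + (RInt Q x0 x1 + RInt Q x1 b)).
    assert (0 <= RInt Q 0 x0) by (apply RInt_ge_0; auto).
    assert (0 <= RInt Q x1 b) by (apply RInt_ge_0; auto).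
    unfold delta. lra. }
  assert (HB: forall b, 0 <= b -> RInt g 0 b = RInt Q 0 b - B b).
  { intros b Hb.
    assert (HI: is_RInt (fun x => Q x - g x) 0 b (B b - B 0)).
    { apply (is_RInt_derive (V:=R_CompleteNormedModule) B (fun x => Q x - g x)).
      - intros x Hx. rewrite Rmin_left in Hx by lra.
        eapply is_derive_eq.
        + apply (is_derive_plus (fun t => u t * Derive u t) (fun t => tanh (p * t) * (u t * u t))).
          * apply (is_derive_mult u (Derive u)). apply Derive_correct, H1. apply Derive_correct, H2.
            intros; apply Rmult_comm.
          * apply (is_derive_mult (fun t => tanh (p * t)) (fun t => u t * u t)). apply is_derive_th.
            apply (is_derive_mult u u); try apply Derive_correct, H1. intros; apply Rmult_comm.
            intros; apply Rmult_comm.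
        + unfold plus, mult; simpl. specialize (Heq x ltac:(lra)).
          assert (E: Derive (Derive u) x = u x - (p+1)*(1 - tanh (p*x)^2) * u x + tanh (p*x) * phi p x) by lra.
          rewrite E. unfold Q, g. ring.
      - intros; apply Cg. }
    assert (B 0 = 0) by (unfold B; rewrite Hu0; ring).
    rewrite H in HI. apply (is_RInt_unique (V:=R_CompleteNormedModule)) in HI.
    assert (E4: RInt g 0 b = RInt (fun x => Q x - (Q x - g x)) 0 b).
    { assert (Hgq: forall x, g x = Q x - (Q x - g x)) by (intros; ring).
      apply (RInt_ext (V:=R_CompleteNormedModule)). intros x _. apply Hgq. }
    pose proof (RInt_minus (V:=R_CompleteNormedModule) Q (fun x => Q x - g x) 0 b (exQ 0 b)
      (ex_RInt_continuous (V:=R_CompleteNormedModule) _ 0 b (fun z _ => Cg z))) as E3.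
    change (RInt (fun x => Q x - (Q x - g x)) 0 b = RInt Q 0 b - RInt (fun x => Q x - g x) 0 b) in E3.
    rewrite E4, E3, HI, Rminus_0_r. reflexivity. }
  assert (Hx1: x1 = x0 + eta / 2) by reflexivity.
  assert (HBdef: forall x, B x = u x * Derive u x + tanh (p * x) * (u x * u x)) by reflexivity.
  clearbody delta B x1.
  apply Rnot_le_lt. intro HJ.
  destruct Igu as [J HJg]. 
  assert (EJ: int0inf g = J) by (unfold int0inf; apply (is_RInt_gen_unique (V:=R_CompleteNormedModule)); exact HJg).
  rewrite EJ in HJ.
  destruct (gen_elim g J HJg (delta / 2)) as [M HM]; [lra|].
  apply (noint (fun x => 1 * (u x * u x) + 1 * (Derive u x * Derive u x)) (Rmax M x1 + 1) (delta / 3)).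
  - apply ex_lin; auto.
  - pose proof (Rmax_r M x1). lra.
  - lra.
  - intros x _. pose proof (Rle_0_sqr (u x)). pose proof (Rle_0_sqr (Derive u x)). unfold Rsqr in *. lra.
  - intros b Hb. pose proof (Rmax_l M x1). pose proof (Rmax_r M x1).
    destruct (HM b ltac:(lra)) as [y [Hy1 Hy2]].
    apply (is_RInt_unique (V:=R_CompleteNormedModule)) in Hy1. rewrite HB in Hy1 by lra.
    specialize (HQb b ltac:(lra)).
    apply Rabs_def2 in Hy2.
    assert (HBb: delta / 2 < B b) by lra.
    rewrite HBdef in HBb.
    pose proof (amgm (u b) (Derive u b)).
    assert (tanh (p * b) * (u b * u b) <= 1 * (u b * u b)).
    { apply Rmult_le_compat_r. apply Rle_0_sqr. apply tanh_le1. }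
    pose proof (Rle_0_sqr (Derive u b)). unfold Rsqr in *.
    lra.
Qed.


Lemma exp_le_mono x y : x <= y -> exp x <= exp y.
Proof. intros [H|H]. left; apply exp_increasing; auto. rewrite H; lra. Qed.

Lemma ex_scal (f : R -> R) c : ex_RInt_gen f F0 Finf -> ex_RInt_gen (fun x => c * f x) F0 Finf.
Proof.
  intros H. apply ex_ext with (fun x => c * f x + 0 * f x). intros; ring. apply ex_lin; auto.
Qed.

Lemma ex_exp2 : ex_RInt_gen (fun x => exp (-2 * x)) F0 Finf.
Proof.
  exists (1/2). apply gen_intro.
  - intros b _. apply (ex_RInt_continuous (V:=R_CompleteNormedModule)). intros z _.
    apply cont_ex. auto_derive. auto.
  - intros eps He. exists (Rabs (ln eps)). intros b Hb.
    assert (HI: is_RInt (fun x => exp (-2 * x)) 0 b (minus (- exp (-2 * b) / 2) (- exp (-2 * 0) / 2))).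
    { apply (is_RInt_derive (V:=R_CompleteNormedModule) (fun x => - exp (-2 * x) / 2)).
      - intros x _. auto_derive. auto. field.
      - intros x _. apply cont_ex. auto_derive. auto. }
    apply (is_RInt_unique (V:=R_CompleteNormedModule)) in HI. rewrite HI.
    unfold minus, plus, opp; simpl. rewrite Rmult_0_r, exp_0.
    assert (exp (-2 * b) < eps).
    { rewrite <- (exp_ln eps) by auto. apply exp_increasing.
      destruct (Rle_lt_dec 0 (ln eps)).
      - rewrite Rabs_right in Hb by lra. lra.
      - rewrite Rabs_left in Hb by lra. lra. }
    pose proof (exp_pos (-2 * b)).
    rewrite Rabs_left1. lra. lra.
Qed.

Lemma phi2_le p x : 0 < p -> 0 <= x -> phi p x * phi p x <= exp (2 * ln 2 / p) * exp (-2 * x).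
Proof.
  intros Hp Hx. rewrite phi_exp. rewrite <- !exp_plus.
  apply exp_le_mono.
  assert (Hc: exp (p * x) / 2 <= cosh (p * x)).
  { unfold cosh. pose proof (exp_pos (-(p*x))). lra. }
  assert (Hl: ln (exp (p * x) / 2) <= ln (cosh (p * x))).
  { destruct (Req_dec (exp (p * x) / 2) (cosh (p * x))) as [E|E]. rewrite E; lra.
    left. apply ln_increasing. pose proof (exp_pos (p*x)). lra. lra. }
  unfold Rdiv in Hl. rewrite ln_mult in Hl by (try apply exp_pos; lra).
  rewrite ln_exp, ln_Rinv in Hl by lra.
  assert (0 < / p) by (apply Rinv_0_lt_compat; lra).
  assert (E: 2 * ln 2 / p + -2 * x = - (/ p * (2 * (p * x + - ln 2)))) by (field; lra).
  rewrite E. nra.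
Qed.

Lemma ex_phi2 p : 0 < p -> ex_RInt_gen (fun x => phi p x * phi p x) F0 Finf.
Proof.
  intros Hp. apply cmp with (fun x => exp (2 * ln 2 / p) * exp (-2 * x)).
  - intros x. apply cmul; apply cont_phi; auto.
  - intros x Hx. split. pose proof (phi_pos p x). nra. apply phi2_le; auto.
  - apply ex_scal, ex_exp2.
Qed.

Lemma gen_ge (h : R -> R) l : is_RInt_gen h F0 Finf l -> (forall x, continuous h x) ->
  (forall x, 0 <= x -> 0 <= h x) -> forall b, 0 <= b -> RInt h 0 b <= l.
Proof.
  intros Hl Hc Hpos.
  assert (exh: forall a b, ex_RInt h a b).
  { intros a b. apply (ex_RInt_continuous (V:=R_CompleteNormedModule)). intros; apply Hc. }
  intros b Hb. apply Rnot_lt_le. intro Hlt.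
  destruct (gen_elim h l Hl (RInt h 0 b - l)) as [M HM]; [lra|].
  destruct (HM (Rmax b M + 1)) as [y [Hy1 Hy2]]. { pose proof (Rmax_r b M). lra. }
  apply (is_RInt_unique (V:=R_CompleteNormedModule)) in Hy1.
  assert (RInt h 0 b <= RInt h 0 (Rmax b M + 1)).
  { rewrite <- (RInt_Chasles h 0 b (Rmax b M + 1)) by apply exh.
    change (plus (RInt h 0 b) (RInt h b (Rmax b M + 1))) with (RInt h 0 b + RInt h b (Rmax b M + 1)).
    assert (0 <= RInt h b (Rmax b M + 1)).
    { apply RInt_ge_0; [pose proof (Rmax_l b M); lra|apply exh|]. intros x Hx. apply Hpos. lra. }
    lra. }
  rewrite Hy1 in H. apply Rabs_def2 in Hy2. lra.
Qed.

Lemma T_pos p : 0 < p -> 0 < int0inf (fun x => phi p x * phi p x).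
Proof.
  intros Hp. pose proof (RInt_gen_correct (V:=R_CompleteNormedModule) _ (ex_phi2 p Hp)) as H.
  apply Rlt_le_trans with (RInt (fun x => phi p x * phi p x) 0 1).
  - apply RInt_gt_0. lra. intros x _. pose proof (phi_pos p x). nra.
    intros; apply cmul; apply cont_phi; auto.
  - unfold int0inf. apply gen_ge; auto. intros; apply cmul; apply cont_phi; auto.
    intros x _. pose proof (phi_pos p x). nra. lra.
Qed.


Lemma exd_plus (f g : R -> R) x : ex_derive f x -> ex_derive g x -> ex_derive (fun y => f y + g y) x.
Proof. apply (ex_derive_plus (K:=R_AbsRing) (V:=R_NormedModule)). Qed.

Lemma lin_homog p (f g : R -> R) (al : R) : 0 < p ->
  (forall x, ex_derive f x) -> (forall x, ex_derive (Derive f) x) ->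
  (forall x, ex_derive g x) -> (forall x, ex_derive (Derive g) x) ->
  sq_int f -> sq_int (Derive f) -> sq_int g -> sq_int (Derive g) ->
  (forall x, 0 <= x -> Derive (Derive f) x + al * Derive (Derive g) x =
      (1 - (p + 1) * (1 - tanh (p * x) ^ 2)) * (f x + al * g x)) ->
  forall x, 0 <= x -> f x + al * g x = (f 0 + al * g 0) * phi p x.
Proof.
  intros Hp Hf1 Hf2 Hg1 Hg2 If Idf Ig Idg Heq.
  set (h := fun x => f x + al * g x).
  assert (Dh: Derive h = fun x => Derive f x + al * Derive g x).
  { apply functional_extensionality; intro x. unfold h.
    rewrite Derive_plus; auto. rewrite Derive_scal. reflexivity. apply ex_derive_scal; auto. }
  assert (Hh1: forall x, ex_derive h x).
  { intros x. apply exd_plus; auto. apply ex_derive_scal; auto. }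
  assert (Hh2: forall x, ex_derive (Derive h) x).
  { intros x. rewrite Dh. apply exd_plus; auto. apply ex_derive_scal; auto. }
  intros x Hx.
  set (H := fun x => 1 * (2 * (f x * f x) + 2 * al ^ 2 * (g x * g x))
              + 1 * (2 * (Derive f x * Derive f x) + 2 * al ^ 2 * (Derive g x * Derive g x))).
  assert (E1: forall y, 0 <= y -> Derive (Derive h) y = (1 - (p + 1) * (1 - tanh (p * y) ^ 2)) * h y).
  { intros y Hy. rewrite Dh. rewrite Derive_plus; auto. rewrite Derive_scal. apply Heq; auto.
    apply ex_derive_scal; auto. }
  assert (E2: ex_RInt_gen H F0 Finf) by (apply ex_lin; apply ex_lin; auto).
  assert (E3: forall y, 0 <= y -> h y * h y + Derive h y * Derive h y <= H y).
  { intros y Hy. rewrite Dh. unfold h, H.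
    pose proof (pow2_ge_0 (f y - al * g y)). pose proof (pow2_ge_0 (Derive f y - al * Derive g y)).
    nra. }
  exact (proj1 (homog p h H Hp Hh1 Hh2 E1 E2 E3 x Hx)).
Qed.

Lemma sum_upto_ext n (f g : nat -> R) : (forall i, (i < n)%nat -> f i = g i) -> sum_upto n f = sum_upto n g.
Proof.
  induction n; simpl; intros H; auto. rewrite IHn, H; try reflexivity; try lia. intros; apply H; lia.
Qed.

Lemma sum_upto_const n (f : nat -> R) A : (forall i, (i < n)%nat -> f i = A) -> sum_upto n f = INR n * A.
Proof.
  induction n; intros H. simpl; ring. cbn [sum_upto].
  rewrite IHn, H by (try lia; intros; apply H; lia).
  rewrite S_INR. ring.
Qed.

Lemma sum_split n k (f : nat -> R) A B C : (k < n)%nat ->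
  (forall i, (i < k)%nat -> f i = A) -> f k = B -> (forall i, (k < i)%nat -> (i < n)%nat -> f i = C) ->
  sum_upto n f = INR k * A + B + INR (n - 1 - k) * C.
Proof.
  intros Hk HA HB HC. induction n. lia.
  cbn [sum_upto]. destruct (Nat.eq_dec k n) as [->|Hne].
  - rewrite (sum_upto_const n f A) by auto. rewrite HB.
    replace (S n - 1 - n)%nat with 0%nat by lia. simpl. ring.
  - rewrite IHn by (try lia; intros; apply HC; lia). rewrite HC by lia.
    replace (S n - 1 - k)%nat with (S (n - 1 - k)) by lia. rewrite S_INR. ring.
Qed.

Lemma e_lt k i : (i < k)%nat -> e_vec k i = 1.
Proof. intros H. unfold e_vec. apply Nat.ltb_lt in H. rewrite H. auto. Qed.
Lemma e_eq k : e_vec k k = - INR k.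
Proof. unfold e_vec. rewrite Nat.ltb_irrefl, Nat.eqb_refl. auto. Qed.
Lemma e_gt k i : (k < i)%nat -> e_vec k i = 0.
Proof.
  intros H. unfold e_vec. destruct (Nat.ltb_spec i k); [lia|].
  destruct (Nat.eqb_spec i k); [lia|]. auto.
Qed.

Lemma esum_lt N j k X : (j < k)%nat -> (k < N)%nat ->
  sum_upto N (fun i => e_vec j i * e_vec k i * X) = 0.
Proof.
  intros Hjk HkN. rewrite (sum_split N j _ X (- INR j * X) 0).
  - ring.
  - lia.
  - intros i Hi. rewrite e_lt, e_lt by lia. ring.
  - rewrite e_eq, e_lt by lia. ring.
  - intros i Hi _. rewrite e_gt by lia. ring.
Qed.

Lemma esum_neq N j k X : j <> k -> (j < N)%nat -> (k < N)%nat ->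
  sum_upto N (fun i => e_vec j i * e_vec k i * X) = 0.
Proof.
  intros Hne Hj Hk. destruct (Nat.lt_ge_cases j k).
  - apply esum_lt; auto.
  - rewrite (sum_upto_ext N _ (fun i => e_vec k i * e_vec j i * X)) by (intros; ring).
    apply esum_lt; lia.
Qed.

Lemma esum_eq N j X : (j < N)%nat ->
  sum_upto N (fun i => e_vec j i * e_vec j i * X) = INR j * (INR j + 1) * X.
Proof.
  intros Hj. rewrite (sum_split N j _ X (INR j * INR j * X) 0).
  - ring.
  - lia.
  - intros i Hi. rewrite e_lt by lia. ring.
  - rewrite e_eq. ring.
  - intros i Hi _. rewrite e_gt by lia. ring.
Qed.


Lemma eqn_W N p k (W : graph_fun) : 0 < p ->
  (forall i x, (i < N)%nat -> 0 <= x -> Lminus p W i x = U p k i x) ->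
  forall i x, (i < N)%nat -> 0 <= x ->
  Derive (Derive (W i)) x = (1 - (p + 1) * (1 - tanh (p * x) ^ 2)) * W i x
                            + tanh (p * x) * phi p x * e_vec k i.
Proof.
  intros Hp H i x Hi Hx. specialize (H i x Hi Hx). unfold Lminus, U in H.
  rewrite sech2, Dphi in H by auto. lra.
Qed.

Lemma structure N p k (W : graph_fun) : (3 <= N)%nat -> 0 < p -> (1 <= k <= N - 1)%nat ->
  in_H2Gamma N W -> in_L2c N p W ->
  (forall i x, (i < N)%nat -> 0 <= x -> Lminus p W i x = U p k i x) ->
  W 0%nat 0 = 0 /\ forall i x, (i < N)%nat -> 0 <= x -> W i x = e_vec k i * W 0%nat x.
Proof.
  intros HN Hp Hk [Hreg [Hcont _]] [_ Hinner] HL.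
  pose proof (eqn_W N p k W Hp HL) as Eq.
  set (a := W 0%nat 0).
  assert (R0: (0 < N)%nat) by lia.
  assert (s1: forall i x, (i < k)%nat -> 0 <= x -> W i x = W 0%nat x).
  { intros i x Hi Hx.
    destruct (Hreg i ltac:(lia)) as [A1 [A2 [A3 [A4 _]]]].
    destruct (Hreg 0%nat R0) as [B1 [B2 [B3 [B4 _]]]].
    pose proof (lin_homog p (W i) (W 0%nat) (-1) Hp A1 A2 B1 B2 A3 A4 B3 B4) as L.
    rewrite Hcont in L by lia.
    assert (L' : W i x + -1 * W 0%nat x = (W 0%nat 0 + -1 * W 0%nat 0) * phi p x).
    { apply L; auto. intros y Hy. rewrite !Eq by (auto; lia). rewrite !e_lt by lia. ring. }
    lra. }
  assert (s2: forall i x, (k < i)%nat -> (i < N)%nat -> 0 <= x -> W i x = a * phi p x).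
  { intros i x Hi HiN Hx.
    destruct (Hreg i HiN) as [A1 [A2 [A3 [A4 _]]]].
    destruct (Hreg 0%nat R0) as [B1 [B2 [B3 [B4 _]]]].
    pose proof (lin_homog p (W i) (W 0%nat) 0 Hp A1 A2 B1 B2 A3 A4 B3 B4) as L.
    rewrite Hcont in L by lia.
    assert (L' : W i x + 0 * W 0%nat x = (W 0%nat 0 + 0 * W 0%nat 0) * phi p x).
    { apply L; auto. intros y Hy. rewrite !Eq by (auto; lia). rewrite e_gt by lia. ring. }
    unfold a. lra. }
  assert (s3: forall x, 0 <= x -> W k x + INR k * W 0%nat x = (a + INR k * a) * phi p x).
  { intros x Hx.
    destruct (Hreg k ltac:(lia)) as [A1 [A2 [A3 [A4 _]]]].
    destruct (Hreg 0%nat R0) as [B1 [B2 [B3 [B4 _]]]].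
    pose proof (lin_homog p (W k) (W 0%nat) (INR k) Hp A1 A2 B1 B2 A3 A4 B3 B4) as L.
    rewrite Hcont in L by lia.
    apply L; auto. intros y Hy. rewrite !Eq by (auto; lia). rewrite e_eq, (e_lt k 0) by lia. ring. }
  destruct (Hreg 0%nat R0) as [B1 [B2 [B3 [B4 _]]]].
  assert (CW0: forall x, continuous (W 0%nat) x) by (intros; apply cont_ex; auto).
  assert (IWphi: ex_RInt_gen (fun x => W 0%nat x * phi p x) F0 Finf).
  { apply prod_ex; auto. intros; apply cont_phi; auto. apply ex_phi2; auto. }
  pose proof (ex_phi2 p Hp) as Iphi.
  set (I := int0inf (fun x => W 0%nat x * phi p x)).
  set (T := int0inf (fun x => phi p x * phi p x)).
  unfold inner, Phi in Hinner.
  rewrite (sum_split N k _ (1 * I + 0 * I) ((a + INR k * a) * T + (- INR k) * I) (a * T + 0 * T))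
    in Hinner.
  2: lia.
  2: { intros i Hi. apply int_lin; auto. intros x Hx. rewrite s1 by auto. ring. }
  2: { apply int_lin; auto. intros x Hx.
       replace (W k x) with ((a + INR k * a) * phi p x - INR k * W 0%nat x) by (rewrite <- s3 by auto; ring).
       ring. }
  2: { intros i Hi HiN. apply int_lin; auto. intros x Hx. rewrite s2 by auto. ring. }
  assert (EN: (N - 1 - k + k + 1 = N)%nat) by lia.
  apply (f_equal INR) in EN. rewrite !plus_INR in EN. simpl in EN.
  assert (Ha: a * (T * INR N) = 0).
  { rewrite <- EN. rewrite <- Hinner. ring. }
  assert (HT: 0 < T) by (apply T_pos; auto).
  assert (HNp: 0 < INR N) by (apply lt_0_INR; lia).
  assert (a = 0).
  { apply Rmult_integral in Ha. destruct Ha as [Ha|Ha]; auto. nra. }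
  split; auto.
  intros i x Hi Hx.
  destruct (Nat.lt_total i k) as [Hlt|[->|Hgt]].
  - rewrite e_lt, s1 by auto. ring.
  - rewrite e_eq. pose proof (s3 x Hx). rewrite H in H0. lra.
  - rewrite e_gt, s2 by auto. rewrite H. ring.
Qed.


Lemma inner_e N j k (F G : graph_fun) (h : R -> R) :
  (forall i x, (i < N)%nat -> 0 <= x -> F i x * G i x = e_vec j i * e_vec k i * h x) ->
  ex_RInt_gen h F0 Finf ->
  inner N F G = sum_upto N (fun i => e_vec j i * e_vec k i * int0inf h).
Proof.
  intros H Ih. unfold inner. apply sum_upto_ext. intros i Hi.
  rewrite (int_lin _ h h (e_vec j i * e_vec k i) 0); auto. ring.
  intros x Hx. rewrite H by auto. ring.
Qed.

Theorem lemma5p3 (N : nat) (p : R) (HN : (3 <= N)%nat) (Hp : 0 < p)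
  (W : nat -> graph_fun)
  (HW : forall j, (1 <= j <= N - 1)%nat ->
          in_H2Gamma N (W j) /\ in_L2c N p (W j) /\
          (forall i x, (i < N)%nat -> 0 <= x -> Lminus p (W j) i x = U p j i x)) :
  (forall j k, (1 <= j <= N - 1)%nat -> (1 <= k <= N - 1)%nat -> j <> k ->
     inner N (U p j) (W k) = 0) /\
  (forall j, (1 <= j <= N - 1)%nat -> 0 < inner N (U p j) (W j)) /\
  (forall j k, (1 <= j <= N - 1)%nat -> (1 <= k <= N - 1)%nat -> j <> k ->
     inner N (U p j) (U p k) = 0) /\
  (forall j k, (1 <= j <= N - 1)%nat -> (1 <= k <= N - 1)%nat -> j <> k ->
     inner N (W j) (W k) = 0).
Proof.
  assert (St: forall k, (1 <= k <= N - 1)%nat ->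
     W k 0%nat 0 = 0 /\ forall i x, (i < N)%nat -> 0 <= x -> W k i x = e_vec k i * W k 0%nat x).
  { intros k Hk. destruct (HW k Hk) as [A [B C]]. apply (structure N p k); auto. }
  assert (Reg: forall k, (1 <= k <= N - 1)%nat ->
     (forall x, ex_derive (W k 0%nat) x) /\ (forall x, ex_derive (Derive (W k 0%nat)) x) /\
     sq_int (W k 0%nat) /\ sq_int (Derive (W k 0%nat))).
  { intros k Hk. destruct (HW k Hk) as [[A _] _]. destruct (A 0%nat ltac:(lia)) as [? [? [? [? _]]]].
    repeat split; auto. }
  pose proof (Dphi p Hp) as Dp.
  set (ph' := fun x => - tanh (p * x) * phi p x).
  assert (Cph': forall x, continuous ph' x).
  { intros x. unfold ph'. apply cmul. apply copp, cont_th. apply cont_phi; auto. }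
  assert (Sph': ex_RInt_gen (fun x => ph' x * ph' x) F0 Finf).
  { apply cmp with (fun x => phi p x * phi p x).
    - intros; apply cmul; auto.
    - intros x _. unfold ph'. pose proof (tanh_sq_le1 (p * x)). pose proof (phi_pos p x).
      split. nra.
      assert (tanh (p * x) ^ 2 * (phi p x * phi p x) <= 1 * (phi p x * phi p x)).
      { apply Rmult_le_compat_r. nra. auto. }
      nra.
    - apply ex_phi2; auto. }
  assert (IUW: forall j k, (1 <= j <= N - 1)%nat -> (1 <= k <= N - 1)%nat ->
     inner N (U p j) (W k) = sum_upto N (fun i => e_vec j i * e_vec k i * int0inf (fun x => ph' x * W k 0%nat x))).
  { intros j k Hj Hk. destruct (Reg k Hk) as [R1 [R2 [R3 R4]]].
    apply inner_e.
    - intros i x Hi Hx. unfold U. rewrite (proj2 (St k Hk)) by auto. rewrite Dp. unfold ph'. ring.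
    - apply prod_ex; auto. intros; apply cont_ex; auto. }
  split; [|split; [|split]].
  - intros j k Hj Hk Hne. rewrite IUW by auto. apply esum_neq; auto; lia.
  - intros j Hj. rewrite IUW by auto. rewrite esum_eq by lia.
    destruct (Reg j Hj) as [R1 [R2 [R3 R4]]].
    assert (0 < int0inf (fun x => ph' x * W j 0%nat x)).
    { unfold ph'. apply posit; auto.
      - intros x Hx. destruct (HW j Hj) as [_ [_ HL]]. specialize (HL 0%nat x ltac:(lia) Hx).
        unfold Lminus, U in HL. rewrite sech2, Dp, e_lt in HL by (auto; lia). lra.
      - apply (St j Hj).
      - apply prod_ex; auto. intros; apply cont_ex; auto. }
    assert (1 <= INR j) by (apply (le_INR 1); lia).
    apply Rmult_lt_0_compat; auto. nra.
  - intros j k Hj Hk Hne.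
    rewrite (inner_e N j k _ _ (fun x => ph' x * ph' x)).
    + apply esum_neq; auto; lia.
    + intros i x Hi Hx. unfold U. rewrite Dp. unfold ph'. ring.
    + auto.
  - intros j k Hj Hk Hne.
    destruct (Reg j Hj) as [R1 [R2 [R3 R4]]]. destruct (Reg k Hk) as [Q1 [Q2 [Q3 Q4]]].
    rewrite (inner_e N j k _ _ (fun x => W j 0%nat x * W k 0%nat x)).
    + apply esum_neq; auto; lia.
    + intros i x Hi Hx. rewrite (proj2 (St j Hj)), (proj2 (St k Hk)) by auto. ring.
    + apply prod_ex; auto; intros; apply cont_ex; auto.
Qed.
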